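(* Let $\mathcal{A}$ be a cubical $k$-way tensor of dimension $n$ that is general symmetric with respect to a permutation matrix $P$, i.e. $P\,\mathrm{vec}(\mathcal{A})=\mathrm{vec}(\mathcal{A})$ where $P$ corresponds with a general symmetry. Fix a degree $d$ and cubical factor dimensions: $n^{(i)}_1=\cdots=n^{(i)}_k=m_i$ with $\prod_{i=1}^d m_i=n$, and let $P_1,\dots,P_d$ be permutation matrices with $P=Q^T(P_d\otimes\cdots\otimes P_1)Q$. Suppose $\tilde{\mathcal{A}}=\sum_{j=1}^R\sigma_j\,a^{(1)}_j\circ\cdots\circ a^{(d)}_j$ is a polyadic decomposition with $\|a^{(i)}_j\|_2=1$ for all $i,j$ and with mutually orthogonal rank-1 terms, and let $\mathcal{A}^{(i)}_j$ be the $m_i\times\cdots\times m_i$ ($k$-way) tensor with $\mathrm{vec}(\mathcal{A}^{(i)}_j)=a^{(i)}_j$, so that $\mathcal{A}=\sum_{j=1}^R\sigma_j\,\mathcal{A}^{(d)}_j\otimes\cdots\otimes\mathcal{A}^{(1)}_j$. Assume Condition 1: the $\sigma_j$ are pairwise distinct and, for every $l\in\{1,\dots,R\}$ and every $j\neq l$, $\sigma_j\prod_{i=1}^d (a^{(i)}_l)^TP_i\,a^{(i)}_j=0$. Then each factor $\mathcal{A}^{(i)}_j$ is either general symmetric or general skew-symmetric, i.e. $P_i\,\mathrm{vec}(\mathcal{A}^{(i)}_j)=\pm\mathrm{vec}(\mathcal{A}^{(i)}_j)$, and in each term $j$ the number of indices $i$ for which $\mathcal{A}^{(i)}_j$ is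 general skew-symmetric is either zero or even.
   Context: Grouped index convention: $[j_1\cdots j_m]$ denotes the linear index with the first index varying fastest, and $\mathrm{vec}(\mathcal{B})_{[j_1\cdots j_k]}=\mathcal{B}_{j_1\cdots j_k}$. The outer product $a^{(1)}\circ\cdots\circ a^{(d)}$ has entries $a^{(1)}_{l_1}\cdots a^{(d)}_{l_d}$; two tensors are orthogonal if the sum of entrywise products is zero. Tensor Kronecker product of $k$-way tensors: $(\mathcal{B}\otimes\mathcal{C})_{[i_1i_{k+1}]\cdots[i_ki_{2k}]}=\mathcal{B}_{i_{k+1}\cdots i_{2k}}\mathcal{C}_{i_1\cdots i_k}$. Given degree $d$ and dimensions $n^{(i)}_r$ with $\prod_i n^{(i)}_r=n$, the permuted tensor $\tilde{\mathcal{A}}$ has entries $\tilde{\mathcal{A}}_{[i^{(1)}_1\cdots i^{(1)}_k]\cdots[i^{(d)}_1\cdots i^{(d)}_k]}=\mathcal{A}_{[i^{(1)}_1\cdots i^{(d)}_1]\cdots[i^{(1)}_k\cdots i^{(d)}_k]}$, and $Q$ is the permutation matrix with $Q\,\mathrm{vec}(\mathcal{A})=\mathrm{vec}(\tilde{\mathcal{A}})$. A permutation matrix $P$ of size $n^k$ corresponds with a general symmetry if for every degree $d$ and every such choice of dimensions there are permutation matrices $P_1,\dots,P_d$, $P_i$ of size $\prod_r n^{(i)}_r$, with $P=Q^T(P_d\otimes\cdots\otimes P_1)Q$ (matrix Kronecker product). A factor $\mathcal{A}^{(i)}_j$ is called general symmetric (resp. general skew-symmetric) here if $P_i\,\mathrm{vec}(\mathcal{A}^{(i)}_j)=\mathrm{vec}(\mathcal{A}^{(i)}_j)$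 (resp. $=-\mathrm{vec}(\mathcal{A}^{(i)}_j)$). *)

(* Defs.v *)
From mathcomp Require Import all_boot all_order all_algebra all_fingroup.
Set Implicit Arguments. Unset Strict Implicit. Unset Printing Implicit Defensive.
Import Order.TTheory GRing.Theory Num.Theory.
Local Open Scope ring_scope.

(* Conventions: all indices are 0-based.  A k-way tensor with mode sizes
   N_1..N_k is represented by its vectorization vec(B) : 'cV_(N_1*...*N_k),
   using the grouped (mixed-radix, first index fastest) linear index
   [j_1 ... j_k] = j_1 + N_1 * (j_2 + N_2 * ( ... )). *)

Definition radix (dims : nat -> nat) (r : nat) : nat := (\prod_(s < r) dims s)%N.

Definition digit (dims : nat -> nat) (r x : nat) : nat :=
  ((x %/ radix dims r) %% dims r)%N.

(* entry of a matrix addressed by natural numbers (0 if out of range) *)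
Definition ment {R : nzRingType} {m n : nat} (A : 'M[R]_(m, n)) (x y : nat) : R :=
  match (insub x : option 'I_m), (insub y : option 'I_n) with
  | Some i, Some j => A i j
  | _, _ => 0
  end.

(* Matrix Kronecker product P_d (x) ... (x) P_1 of the family
   Ps i : 'M_(Ms i) (i < d), with the convention
   (B (x) C)_{[i1 i2],[j1 j2]} = B_{i2 j2} C_{i1 j1}; unfolded, its
   entry at ([y_1..y_d],[x_1..x_d]) is prod_i (Ps i)_{y_i x_i}.
   N is the size (= prod_i Ms i in all uses). *)
Definition kronl {R : nzRingType} (N d : nat) (Ms : nat -> nat)
  (Ps : forall i : 'I_d, 'M[R]_(Ms i)) : 'M[R]_N :=
  \matrix_(y < N, x < N) \prod_(i < d) ment (Ps i) (digit Ms i y) (digit Ms i x).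

Arguments kronl {R} N {d} Ms Ps.

Definition outerv {R : nzRingType} (N d : nat) (Ms : nat -> nat)
  (a : forall i : 'I_d, 'cV[R]_(Ms i)) : 'cV[R]_N :=
  \col_(y < N) \prod_(i < d) ment (a i) (digit Ms i y) 0.

Arguments outerv {R} N {d} Ms a.

Definition dotv {R : nzRingType} {N : nat} (u v : 'cV[R]_N) : R :=
  \sum_(l < N) u l 0 * v l 0.

(* Mode sizes of the factor groups: nn i r = n^{(i)}_r (i < d, r < k),
   and M_i = prod_r n^{(i)}_r. *)
Definition grpdim (k : nat) (nn : nat -> nat -> nat) (i : nat) : nat :=
  (\prod_(r < k) nn i r)%N.

(* Index map of the permuted tensor: the entry of vec(tilde A) at
   y = [[i^(1)_1..i^(1)_k] .. [i^(d)_1..i^(d)_k]] is the entry of vec(A)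
   at tidx y = [[i^(1)_1..i^(d)_1] .. [i^(1)_k..i^(d)_k]]. *)
Definition tidx (n k d : nat) (nn : nat -> nat -> nat) (y : nat) : nat :=
  (\sum_(r < k)
     (\sum_(i < d) digit (nn i) r (digit (grpdim k nn) i y)
                     * radix (fun i => nn i r) i) * n ^ r)%N.

Definition Qmx {R : nzRingType} (n k d : nat) (nn : nat -> nat -> nat) : 'M[R]_(n ^ k) :=
  \matrix_(y < n ^ k, x < n ^ k) ((x : nat) == tidx n k d nn y)%:R.

Definition gen_symmetry {R : nzRingType} (n k : nat) (P : 'M[R]_(n ^ k)) : Prop :=
  forall (d : nat) (nn : nat -> nat -> nat),
    (forall r, (r < k)%N -> (\prod_(i < d) nn i r)%N = n) ->
    exists Ps : forall i : 'I_d, 'M[R]_(grpdim k nn i),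
      (forall i, is_perm_mx (Ps i)) /\
      P = (Qmx n k d nn)^T *m kronl (n ^ k) (grpdim k nn) Ps *m Qmx n k d nn.

(* Main.v *)
Require Import Defs.
From mathcomp Require Import all_boot all_order all_algebra all_fingroup.
From mathcomp Require Import ring lra.
Import Order.TTheory GRing.Theory Num.Theory.

Lemma radixS dims r : radix dims r.+1 = (radix dims r * dims r)%N.
Proof. by rewrite /radix big_ord_recr. Qed.

Lemma radix0 dims : radix dims 0 = 1%N.
Proof. by rewrite /radix big_ord0. Qed.

Lemma radix_dvd dims i d : (i <= d)%N -> (radix dims i %| radix dims d)%N.
Proof.
elim: d => [|d IH]; first by rewrite leqn0 => /eqP->.
rewrite leq_eqVlt => /orP[/eqP->//|]; rewrite ltnS => /IH h.
by rewrite radixS; apply: dvdn_trans h (dvdn_mulr _ _).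
Qed.

Lemma radix_const c r : radix (fun _ => c) r = (c ^ r)%N.
Proof. by rewrite /radix prod_nat_const card_ord. Qed.

Lemma radix_gt0_dims dims d i : (0 < radix dims d)%N -> (i < d)%N -> (0 < dims i)%N.
Proof.
move=> h hi; have := radix_dvd dims i.+1 d hi; rewrite radixS.
case: (posnP (dims i)) => // ->; rewrite muln0 dvd0n => /eqP e.
by rewrite e in h.
Qed.

Lemma digit_ext dims dims' r x : (forall i, dims i = dims' i) -> digit dims r x = digit dims' r x.
Proof.
move=> e; rewrite /digit /radix e; congr (_ %/ _ %% _).
by apply: eq_bigr => i _.
Qed.

Lemma digit_low dims i d r q : (i < d)%N ->
  digit dims i (r + q * radix dims d) = digit dims i r.
Proof.
move=> hid; have := radix_dvd dims i.+1 d hid; rewrite radixS => /dvdnP[c ->].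
rewrite /digit; case: (posnP (radix dims i)) => [->|hp]; first by rewrite !divn0.
have -> : (r + q * (c * (radix dims i * dims i)) = (q * c * dims i) * radix dims i + r)%N.
  by rewrite addnC !mulnA -[(q * c * radix dims i * dims i)%N]mulnA (mulnC (radix dims i)) mulnA.
by rewrite divnMDl //; apply: div.modnMDl.
Qed.

Lemma radix_sum_lt dims d (t : nat -> nat) : (forall i, i < d -> t i < dims i)%N ->
  (\sum_(i < d) t i * radix dims i < radix dims d)%N.
Proof.
elim: d => [|d IH] h; first by rewrite big_ord0 radix0.
rewrite big_ord_recr /= radixS.
have h1 := IH (fun i hi => h i (ltnW hi)). have h2 := h d (ltnSn d).
set S := (\sum_(i < d) _)%N in h1 *.
have : (S + t d * radix dims d < radix dims d * (t d).+1)%N.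
  by rewrite mulnS mulnC ltn_add2r.
move/leq_trans; apply; rewrite leq_mul2l h2 orbT //.
Qed.

Lemma digit_sum dims d (t : nat -> nat) : (forall i, i < d -> t i < dims i)%N ->
  forall i, (i < d)%N -> digit dims i (\sum_(i < d) t i * radix dims i) = t i.
Proof.
elim: d => [|d IH] h i hi; first by [].
have h1 := radix_sum_lt dims d t (fun i hi => h i (ltnW hi)).
rewrite big_ord_recr /=.
rewrite ltnS leq_eqVlt in hi; case/orP: hi => [/eqP->|hi].
  rewrite /digit addnC divnMDl; last by apply: leq_ltn_trans h1.
  by rewrite divn_small // addn0 modn_small // h.
by rewrite digit_low // IH // => j hj; apply: h; apply: ltnW.
Qed.

Lemma digit_sum_inv dims d y : (y < radix dims d)%N ->
  (\sum_(i < d) digit dims i y * radix dims i)%N = y.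
Proof.
elim: d y => [|d IH] y hy; first by rewrite big_ord0; move: hy; rewrite radix0; case: y.
rewrite big_ord_recr /=; rewrite radixS in hy.
have hp : (0 < radix dims d)%N by case: (posnP (radix dims d)) hy => // ->.
have e : forall i : 'I_d, digit dims i y = digit dims i (y %% radix dims d).
  move=> i; rewrite {1}(divn_eq y (radix dims d)) addnC digit_low //.
rewrite (eq_bigr (fun i : 'I_d => digit dims i (y %% radix dims d) * radix dims i))%N; last by move=> i _; rewrite e.
rewrite (IH (y %% radix dims d)); last by rewrite ltn_pmod.
rewrite /digit (@modn_small (y %/ radix dims d)); last by rewrite ltn_divLR // mulnC.
by rewrite addnC -divn_eq.
Qed.

Lemma prodn_expn d (m : nat -> nat) k :
  (\prod_(i < d) (m i ^ k) = (\prod_(i < d) m i) ^ k)%N.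
Proof.
elim: d => [|d IH]; first by rewrite !big_ord0 exp1n.
by rewrite !big_ord_recr /= IH expnMn.
Qed.

Section T.
Variables (n k d : nat) (m : nat -> nat).
Hypothesis hn : (\prod_(i < d) m i)%N = n.

Let G := (fun i => m i ^ k)%N.
Let f r i y := digit (fun _ => m i) r (digit G i y).
Let s r y := (\sum_(i < d) f r i y * radix m i)%N.

Lemma tidx_eq y : tidx n k d (fun i _ => m i) y =
  (\sum_(r < k) s r y * radix (fun _ => n) r)%N.
Proof.
rewrite /tidx; apply: eq_bigr => r _; rewrite radix_const; congr (_ * _)%N.
apply: eq_bigr => i _; congr (_ * _)%N; rewrite /f; congr digit.
by apply: digit_ext => i'; rewrite /grpdim prod_nat_const card_ord.
Qed.

Lemma radixG : radix G d = (n ^ k)%N.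
Proof. by rewrite /radix /G prodn_expn hn. Qed.

Lemma m_pos y r i : (y < n ^ k)%N -> (r < k)%N -> (i < d)%N -> (0 < m i)%N.
Proof.
move=> hy hr hi; apply: (radix_gt0_dims m d) => //; rewrite [radix _ _]hn.
have : (0 < n ^ k)%N by apply: leq_ltn_trans hy.
rewrite expn_gt0 => /orP[//|/eqP hk]; by rewrite hk in hr.
Qed.

Lemma f_lt y r i : (y < n ^ k)%N -> (r < k)%N -> (i < d)%N -> (f r i y < m i)%N.
Proof. by move=> hy hr hi; rewrite /f /digit ltn_pmod // (m_pos _ _ _ hy hr hi). Qed.

Lemma s_lt y r : (y < n ^ k)%N -> (r < k)%N -> (s r y < n)%N.
Proof.
move=> hy hr; rewrite -[X in (_ < X)%N]hn; apply: (radix_sum_lt m d (fun i => f r i y)) => i hi; exact: f_lt.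
Qed.

Lemma tidx_lt y : (y < n ^ k)%N -> (tidx n k d (fun i _ => m i) y < n ^ k)%N.
Proof.
move=> hy; rewrite tidx_eq -radix_const; apply: (radix_sum_lt _ k (fun r => s r y)) => r hr; exact: s_lt.
Qed.

Lemma tidx_inj y y' : (y < n ^ k)%N -> (y' < n ^ k)%N ->
  tidx n k d (fun i _ => m i) y = tidx n k d (fun i _ => m i) y' -> y = y'.
Proof.
move=> hy hy'; rewrite !tidx_eq => e.
have es : forall r, (r < k)%N -> s r y = s r y'.
  move=> r hr.
  rewrite -(digit_sum (fun _ => n) k (fun r => s r y) _ r hr); last by move=> r' hr'; exact: s_lt.
  rewrite e (digit_sum (fun _ => n) k (fun r => s r y')) // => r' hr'; exact: s_lt.
have ef : forall r i, (r < k)%N -> (i < d)%N -> f r i y = f r i y'.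
  move=> r i hr hi.
  rewrite -(digit_sum m d (fun i => f r i y) _ i hi); last by move=> i' hi'; exact: f_lt.
  have -> : (\sum_(i < d) f r i y * radix m i = s r y)%N by [].
  rewrite (es r hr) (digit_sum m d (fun i => f r i y')) // => i' hi'; exact: f_lt.
have hG : (0 < radix G d)%N by rewrite radixG; apply: leq_ltn_trans hy.
have ee : forall i, (i < d)%N -> digit G i y = digit G i y'.
  move=> i hi.
  have hGi : (0 < G i)%N := radix_gt0_dims G d i hG hi.
  have h1 : (digit G i y < radix (fun _ => m i) k)%N by rewrite radix_const ltn_pmod.
  have h2 : (digit G i y' < radix (fun _ => m i) k)%N by rewrite radix_const ltn_pmod.
  rewrite -(digit_sum_inv _ _ _ h1) -(digit_sum_inv _ _ _ h2).
  by apply: eq_bigr => r _; congr (_ * _)%N; apply: (ef r i).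
rewrite -(digit_sum_inv G d y) ?radixG // -(digit_sum_inv G d y') ?radixG //.
by apply: eq_bigr => i _; rewrite ee.
Qed.

End T.
Local Open Scope ring_scope.

Lemma sum_blocks (R : comNzRingType) (G : nat -> R) a b :
  \sum_(x < (a * b)%N) G x = \sum_(q < b) \sum_(r < a) G (r + q * a)%N.
Proof.
elim: b => [|b IH]; first by rewrite muln0 !big_ord0.
rewrite big_ord_recr /= -IH.
have e : (a * b.+1 = a * b + a)%N by rewrite mulnS addnC.
rewrite (_ : \sum_(x < a * b.+1) G x = \sum_(x < a * b + a) G x); last by rewrite e.
rewrite big_split_ord /=; congr (_ + _); apply: eq_bigr => i _ /=.
by rewrite addnC mulnC.
Qed.

Lemma digit_top dims d r q : (r < radix dims d)%N -> (q < dims d)%N ->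
  digit dims d (r + q * radix dims d) = q.
Proof.
move=> hr hq; rewrite /digit addnC divnMDl; last by apply: leq_ltn_trans hr.
by rewrite divn_small // addn0 modn_small.
Qed.

Lemma sum_digit_prod (R : comNzRingType) (F : nat -> nat -> R) dims d :
  \sum_(x < radix dims d) \prod_(i < d) F i (digit dims i x) =
  \prod_(i < d) \sum_(t < dims i) F i t.
Proof.
elim: d => [|d IH].
  by rewrite radix0 big_ord1 !big_ord0.
rewrite (radixS dims d) (@sum_blocks R (fun x : nat => \prod_(i < d.+1) F i (digit dims i x))) big_ord_recr /= -IH mulr_suml.
rewrite exchange_big /=; apply: eq_bigr => r _; rewrite mulr_sumr.
apply: eq_bigr => q _; rewrite big_ord_recr /= digit_top //.
congr (_ * _); apply: eq_bigr => i _; rewrite digit_low //.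
Qed.

Lemma mentE (R : nzRingType) p q (A : 'M[R]_(p, q)) (i : 'I_p) (j : 'I_q) :
  ment A i j = A i j.
Proof. by rewrite /ment !valK. Qed.
Arguments mentE {R p q} A i j.

Lemma mentE0 (R : nzRingType) p (A : 'M[R]_(p, 1)) (i : 'I_p) (j : 'I_1) :
  ment A i 0%N = A i j.
Proof. by rewrite (ord1 j) -(mentE A i ord0). Qed.
Arguments mentE0 {R p} A i j.

Lemma ment_mul (R : nzRingType) p q (A : 'M[R]_(p, q)) (b : 'cV[R]_q) u :
  (u < p)%N -> ment (A *m b) u 0%N = \sum_(t < q) ment A u t * ment b t 0%N.
Proof.
move=> hu; have -> : u = nat_of_ord (Ordinal hu) by [].
rewrite (mentE0 _ _ ord0) mxE; apply: eq_bigr => t _.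
by rewrite mentE (mentE0 _ _ ord0).
Qed.

Lemma dot_outer (R : comNzRingType) N d (Ms : nat -> nat)
  (a b : forall i : 'I_d, 'cV[R]_(Ms i)) : N = radix Ms d ->
  dotv (outerv N Ms a) (outerv N Ms b) = \prod_(i < d) dotv (a i) (b i).
Proof.
move=> hN; subst N; rewrite /dotv.
under eq_bigr => l _ do rewrite !mxE -big_split /=.
pose F i t := match (insub i : option 'I_d) with
   Some i' => ment (a i') t 0%N * ment (b i') t 0%N | None => 0 end.
transitivity (\sum_(l < radix Ms d) \prod_(i < d) F i (digit Ms i l)).
  by apply: eq_bigr => l _; apply: eq_bigr => i _; rewrite /F valK.
rewrite sum_digit_prod; apply: eq_bigr => i _; rewrite /F valK.
by apply: eq_bigr => t _; rewrite !(mentE0 _ _ 0).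
Qed.

Lemma kron_outer (R : comNzRingType) N d (Ms : nat -> nat)
  (Ps : forall i : 'I_d, 'M[R]_(Ms i)) (a : forall i : 'I_d, 'cV[R]_(Ms i)) :
  N = radix Ms d ->
  kronl N Ms Ps *m outerv N Ms a = outerv N Ms (fun i => Ps i *m a i).
Proof.
move=> hN; subst N; apply/matrixP => y j; rewrite !mxE.
under eq_bigr => x _ do rewrite !mxE -big_split /=.
pose F i t := match (insub i : option 'I_d) with
   Some i' => ment (Ps i') (digit Ms i y) t * ment (a i') t 0%N | None => 0 end.
transitivity (\sum_(l < radix Ms d) \prod_(i < d) F i (digit Ms i l)).
  by apply: eq_bigr => l _; apply: eq_bigr => i _; rewrite /F valK.
rewrite sum_digit_prod; apply: eq_bigr => i _; rewrite /F valK.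
have hp : (0 < Ms i)%N by apply: (radix_gt0_dims Ms d); [apply: leq_ltn_trans (ltn_ord y)|].
by rewrite ment_mul // ltn_pmod.
Qed.

Lemma dotvC (R : comNzRingType) N (u w : 'cV[R]_N) : dotv u w = dotv w u.
Proof. by apply: eq_bigr => l _; rewrite mulrC. Qed.

Lemma dotvZr (R : comNzRingType) N (u w : 'cV[R]_N) c : dotv u (c *: w) = c * dotv u w.
Proof. rewrite /dotv mulr_sumr; apply: eq_bigr => l _; rewrite mxE; ring. Qed.

Lemma dotv_sum (R : comNzRingType) N (u : 'cV[R]_N) Rk (F : 'I_Rk -> 'cV[R]_N) :
  dotv u (\sum_(j < Rk) F j) = \sum_(j < Rk) dotv u (F j).
Proof.
rewrite /dotv exchange_big /=; apply: eq_bigr => l _.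
by rewrite summxE mulr_sumr.
Qed.

Lemma dotv_perm (R : comNzRingType) N (P : 'M[R]_N) (u : 'cV[R]_N) :
  is_perm_mx P -> dotv (P *m u) (P *m u) = dotv u u.
Proof.
case/existsP => s /eqP ->; rewrite -row_permE /dotv.
rewrite [RHS](reindex_inj (@perm_inj _ s)) /=; apply: eq_bigr => l _.
by rewrite !mxE.
Qed.

Lemma dotv_ge0 (R : realFieldType) N (u : 'cV[R]_N) : 0 <= dotv u u.
Proof. by apply: sumr_ge0 => l _; rewrite -expr2 sqr_ge0. Qed.

Lemma dotv_eq0 (R : realFieldType) N (u : 'cV[R]_N) : dotv u u = 0 -> u = 0.
Proof.
move=> h; apply/matrixP => l j; rewrite !mxE ord1.
have hge : forall l' : 'I_N, true -> 0 <= u l' 0 * u l' 0.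
  by move=> l' _; rewrite -expr2 sqr_ge0.
have /(_ l isT) /eqP := psumr_eq0P (P := xpredT) (F := fun l => u l 0 * u l 0) hge h.
by rewrite mulf_eq0 orbb => /eqP.
Qed.

Arguments dotvC {R N}. Arguments dotvZr {R N}. Arguments dotv_sum {R N}.
Arguments dotv_perm {R N}. Arguments dotv_ge0 {R N}. Arguments dotv_eq0 {R N}.

Lemma dotv_comb (R : comNzRingType) N (w b : 'cV[R]_N) c :
  dotv (w + c *: b) (w + c *: b) = dotv w w + 2 * c * dotv b w + c ^+ 2 * dotv b b.
Proof.
rewrite /dotv.
transitivity (\sum_(l < N) (w l 0 * w l 0 + 2 * c * (b l 0 * w l 0) + c ^+ 2 * (b l 0 * b l 0))).
  by apply: eq_bigr => l _; rewrite !mxE; ring.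
by rewrite !big_split /= -!mulr_sumr.
Qed.
Arguments dotv_comb {R N}.

Lemma gamma_facts (R : realFieldType) M (P : 'M[R]_M) (b : 'cV[R]_M) :
  is_perm_mx P -> dotv b b = 1 ->
  [/\ -1 <= dotv b (P *m b) <= 1,
      dotv b (P *m b) = 1 -> P *m b = b &
      dotv b (P *m b) = -1 -> P *m b = - b].
Proof.
move=> hP hb; have hw := dotv_perm P b hP; rewrite hb in hw.
have h1 := dotv_comb (P *m b) b 1; have h2 := dotv_comb (P *m b) b (-1).
rewrite hw hb in h1 h2.
have g1 := dotv_ge0 (P *m b + 1 *: b); have g2 := dotv_ge0 (P *m b + (-1) *: b).
rewrite h1 in g1; rewrite h2 in g2.
split.
- apply/andP; split; lra.
- move=> e; rewrite e in h2; apply/eqP; rewrite -subr_eq0 -scaleN1r; apply/eqP.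
  apply: dotv_eq0; rewrite h2; ring.
- move=> e; rewrite e in h1; apply/eqP; rewrite -addr_eq0 -[b in _ + b]scale1r; apply/eqP.
  apply: dotv_eq0; rewrite h1; ring.
Qed.
Arguments gamma_facts {R M P b}.

Lemma QQt (R : nzRingType) n k d (m : nat -> nat) :
  (\prod_(i < d) m i)%N = n ->
  Qmx n k d (fun i _ => m i) *m (Qmx n k d (fun i _ => m i))^T = 1%:M :> 'M[R]_(n ^ k).
Proof.
move=> hn; apply/matrixP => y y'; rewrite !mxE.
have hl := @tidx_lt n k d m hn y (ltn_ord y).
rewrite (bigD1 (Ordinal hl)) //= big1 => [|x hx]; last first.
  rewrite !mxE; move: hx; rewrite -val_eqE /= => /negbTE ->; by rewrite mul0r.
rewrite !mxE eqxx mul1r addr0.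
change (((tidx n k d (fun i _ => m i) y) == tidx n k d (fun i _ => m i) y')%:R = (y == y')%:R :> R).
clear hl; case: (eqVneq y y') => [->|hne]; first by rewrite eqxx.
case: eqP => // e; exfalso; move/eqP: hne; apply; apply: val_inj.
by apply: (@tidx_inj n k d m hn y y' (ltn_ord y) (ltn_ord y')).
Qed.

Theorem theorem2 (R : realFieldType) (n k d Rk : nat) (m : nat -> nat)
  (P : 'M[R]_(n ^ k)) (vecA : 'cV[R]_(n ^ k))
  (Ps : forall i : 'I_d, 'M[R]_(m i ^ k))
  (sigma : 'I_Rk -> R) (a : forall i : 'I_d, 'I_Rk -> 'cV[R]_(m i ^ k)) :
  is_perm_mx P ->
  gen_symmetry P ->
  P *m vecA = vecA ->
  (\prod_(i < d) m i)%N = n ->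
  (forall i, is_perm_mx (Ps i)) ->
  P = (Qmx n k d (fun i _ => m i))^T *m kronl (n ^ k) (fun i => m i ^ k)%N Ps
        *m Qmx n k d (fun i _ => m i) ->
  Qmx n k d (fun i _ => m i) *m vecA =
    \sum_(j < Rk) sigma j *: outerv (n ^ k) (fun i => m i ^ k)%N (fun i => a i j) ->
  (forall i j, dotv (a i j) (a i j) = 1) ->
  (forall j, sigma j != 0) ->
  (forall j l, j != l ->
     dotv (sigma j *: outerv (n ^ k) (fun i => m i ^ k)%N (fun i => a i j))
          (sigma l *: outerv (n ^ k) (fun i => m i ^ k)%N (fun i => a i l)) = 0) ->
  injective sigma ->
  (forall l j, j != l ->
     sigma j * \prod_(i < d) dotv (a i l) (Ps i *m a i j) = 0) ->
  forall j : 'I_Rk,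
    (forall i : 'I_d, Ps i *m a i j = a i j \/ Ps i *m a i j = - a i j) /\
    ~~ odd #|[set i : 'I_d | Ps i *m a i j == - a i j]|.
Proof.
move=> hPperm _ hPA hn hPs hP hQA hnorm hsig horth _ hcond j.
have hN : (n ^ k)%N = radix (fun i => m i ^ k)%N d by rewrite (@radixG n k d m hn).
set Q := Qmx n k d (fun i _ => m i) in hP hQA.
set K := kronl (n ^ k) (fun i => m i ^ k)%N Ps in hP.
set x := fun l => outerv (n ^ k) (fun i => m i ^ k)%N (fun i => a i l).
have hQQ : Q *m Q^T = 1%:M by apply: QQt.
have Kv : K *m (\sum_(l < Rk) sigma l *: x l) = \sum_(l < Rk) sigma l *: x l.
  rewrite -hQA -{2}hPA hP !mulmxA hQQ mul1mx //.
have dxx : forall l l', dotv (x l) (x l') = \prod_(i < d) dotv (a i l) (a i l').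
  by move=> l l'; apply: dot_outer.
have Kx : forall l, K *m x l = outerv (n ^ k) (fun i => m i ^ k)%N (fun i => Ps i *m a i l).
  by move=> l; apply: kron_outer.
have e1 : dotv (x j) (\sum_(l < Rk) sigma l *: x l) = sigma j.
  rewrite dotv_sum (bigD1 j) //= big1 => [|l hl].
    by rewrite dotvZr dxx big1 ?mulr1 ?addr0.
  rewrite dotvZr.
  have h := horth l j hl; rewrite -/(x l) -/(x j) dotvZr dotvC dotvZr in h.
  move/eqP: h; rewrite !mulf_eq0 (negbTE (hsig l)) (negbTE (hsig j)) /= => /eqP h.
  by rewrite h mulr0.
set gam := fun i => dotv (a i j) (Ps i *m a i j).
have e2 : dotv (x j) (K *m \sum_(l < Rk) sigma l *: x l) = sigma j * \prod_(i < d) gam i.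
  rewrite mulmx_sumr dotv_sum (bigD1 j) //= big1 => [|l hl].
    by rewrite -scalemxAr dotvZr Kx dot_outer // addr0.
  by rewrite -scalemxAr dotvZr Kx dot_outer // hcond.
have hprod : \prod_(i < d) gam i = 1.
  apply: (mulfI (hsig j)); by rewrite -e2 Kv e1 mulr1.
have hf := fun i => gamma_facts (hPs i) (hnorm i j).
have hpm : forall i, gam i = 1 \/ gam i = -1.
  move=> i; have [/andP[lo hi] _ _] := hf i.
  change (is_true (-1 <= gam i)) in lo; change (is_true (gam i <= 1)) in hi.
  have hrest : `|(\prod_(i' < d | i' != i) gam i')| <= 1.
    rewrite normr_prod; apply: prodr_ile1 => i' _.
    rewrite normr_ge0 /= ler_norml; by case: (hf i') => /andP[-> ->].
  have : 1 <= `|gam i|.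
    have := congr1 Num.norm hprod; rewrite (bigD1 i) //= normrM normr1 => e.
    rewrite -e -{2}[`|gam i|]mulr1; apply: ler_wpM2l => //.
  rewrite ler_normr => /orP[h|h]; [left|right]; lra.
have hPa : forall i, Ps i *m a i j = a i j \/ Ps i *m a i j = - a i j.
  move=> i; have [_ h1 h2] := hf i.
  by case: (hpm i) => e; [left; apply: h1|right; apply: h2].
split => //.
set S := [set i : 'I_d | Ps i *m a i j == - a i j].
have : \prod_(i < d) gam i = (-1) ^+ #|S|.
  rewrite (bigID (mem S)) /= -[RHS]mulr1; congr (_ * _).
    rewrite -prodr_const; apply: eq_bigr => i; rewrite inE => /eqP e.
    by rewrite /gam e -(scaleN1r (a i j)) dotvZr hnorm mulr1.
  apply: big1 => i; rewrite inE => hi.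
  case: (hPa i) => e; last by rewrite e eqxx in hi.
  by rewrite /gam e hnorm.
rewrite hprod -signr_odd; case: (odd #|S|) => //= h.
have : (1 : R) + 1 = 0 by rewrite {1}h addNr.
lra.
Qed.
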